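(* Let $t\ge 2$ be an integer and let $G_t$ be the graph defined below. Then every binomial in $\mathcal{G}=\mathcal{G}_1\cup\mathcal{G}_2\cup\mathcal{G}_3$ is primitive, $I_{G_t}$ is generated by $\mathcal{G}$, and $\mathcal{G}$ is a universal Gröbner basis of $I_{G_t}$, where $\mathcal{G}_1=\{a_ib_j-a_jb_i : 1\le i<j\le t\}$, $\mathcal{G}_2=\{a_ia_jf_1f_3e_2-f_2e_1e_3b_ib_j : 1\le i<j\le t\}$, $\mathcal{G}_3=\{a_i^2f_1f_3e_2-f_2e_1e_3b_i^2 : 1\le i\le t\}$.
   Context: $\mathbb{K}$ is an algebraically closed field of characteristic zero. For $t\ge2$, $G_t$ is the graph with vertex set $\{x_1,x_2,y_1,\dots,y_t,z_1,z_2,w_1,w_2\}$ and edges $a_i=\{x_1,y_i\}$, $b_i=\{x_2,y_i\}$ ($1\le i\le t$), $e_1=\{x_1,z_1\}$, $e_2=\{z_1,z_2\}$, $e_3=\{z_2,x_1\}$, $f_1=\{x_2,w_1\}$, $f_2=\{w_1,w_2\}$, $f_3=\{w_2,x_2\}$ (i.e. $K_{2,t}$ with a triangle attached at each of the two vertices of degree $t$). Its toric ideal $I_{G_t}$ is the kernel of the $\mathbb{K}$-algebra map from $\mathbb{K}[E_t]=\mathbb{K}[a_1,\dots,a_t,f_1,f_2,f_3,e_1,e_2,e_3,b_1,\dots,b_t]$ to the polynomial ring on the vertices sending each edge variable to the product of its two endpoints. A binomial $u_1-u_2\in I_{G_t}$ is primitive if there is no binomial $g_1-g_2\in I_{G_t}$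 (other than itself) with $g_1\mid u_1$ and $g_2\mid u_2$. A universal Gröbner basis is a set that is a Gröbner basis with respect to every monomial order. *)

(* Defs.v *)
From HB Require Import structures.
From mathcomp Require Import all_boot all_order all_algebra.
From mathcomp Require Import mpoly.

Set Implicit Arguments.
Unset Strict Implicit.
Unset Printing Implicit Defensive.

Import Order.TTheory GRing.Theory.
Local Open Scope ring_scope.

(* Edge variables of K[E_t] (there are 2t+6 of them), 0-indexed:       *)
(*   a_i = i            (0 <= i < t)    a_i = {x1, y_i}                 *)
(*   b_i = t + i        (0 <= i < t)    b_i = {x2, y_i}                 *)
(*   e1 = 2t, e2 = 2t+1, e3 = 2t+2,  f1 = 2t+3, f2 = 2t+4, f3 = 2t+5    *)
(* Vertices (there are t+6 of them):                                   *)
(*   x1 = 0, x2 = 1, z1 = 2, z2 = 3, w1 = 4, w2 = 5, y_i = 6 + i        *)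
(* The paper's indices 1..t correspond to 0..t-1 here.                 *)

Definition nE (t : nat) : nat := (5 + t.*2).+1.
Definition nV (t : nat) : nat := (5 + t).+1.

Definition var_a (t : nat) (i : 'I_t) : 'I_(nE t) := inord i.
Definition var_b (t : nat) (i : 'I_t) : 'I_(nE t) := inord (t + i)%N.
Definition var_e1 (t : nat) : 'I_(nE t) := inord (t.*2).
Definition var_e2 (t : nat) : 'I_(nE t) := inord (t.*2 + 1)%N.
Definition var_e3 (t : nat) : 'I_(nE t) := inord (t.*2 + 2)%N.
Definition var_f1 (t : nat) : 'I_(nE t) := inord (t.*2 + 3)%N.
Definition var_f2 (t : nat) : 'I_(nE t) := inord (t.*2 + 4)%N.
Definition var_f3 (t : nat) : 'I_(nE t) := inord (t.*2 + 5)%N.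

Definition endpts (t k : nat) : nat * nat :=
  if (k < t)%N then (0, 6 + k)%N
  else if (k < t.*2)%N then (1, 6 + (k - t))%N
  else if (k == t.*2)%N then (0, 2)%N            (* e1 = {x1, z1} *)
  else if (k == t.*2 + 1)%N then (2, 3)%N        (* e2 = {z1, z2} *)
  else if (k == t.*2 + 2)%N then (3, 0)%N        (* e3 = {z2, x1} *)
  else if (k == t.*2 + 3)%N then (1, 4)%N        (* f1 = {x2, w1} *)
  else if (k == t.*2 + 4)%N then (4, 5)%N        (* f2 = {w1, w2} *)
  else (5, 1)%N.                             (* f3 = {w2, x2} *)

Definition edge_image (K : fieldType) (t : nat) (k : 'I_(nE t))
  : {mpoly K[nV t]} :=
  'X_(inord (endpts t k).1) * 'X_(inord (endpts t k).2).

Arguments edge_image : clear implicits.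

Definition toric_map (K : fieldType) (t : nat) (p : {mpoly K[nE t]})
  : {mpoly K[nV t]} :=
  p \mPo [tuple edge_image K t k | k < nE t].

Arguments toric_map : clear implicits.

Definition toric_ideal (K : fieldType) (t : nat) (p : {mpoly K[nE t]}) : Prop :=
  toric_map K t p = 0.
Arguments toric_ideal : clear implicits.

Definition binom (K : fieldType) (n : nat) (u : 'X_{1..n} * 'X_{1..n})
  : {mpoly K[n]} := 'X_[u.1] - 'X_[u.2].

Definition ideal_gen (K : fieldType) (n : nat) (S : {mpoly K[n]} -> Prop)
  (p : {mpoly K[n]}) : Prop :=
  exists (gs cs : seq {mpoly K[n]}),
    (forall g, g \in gs -> S g) /\ size cs = size gs /\
    p = \sum_(i < size gs) cs`_i * gs`_i.

Definition primitive (K : fieldType) (n : nat) (I : {mpoly K[n]} -> Prop)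
  (u1 u2 : 'X_{1..n}) : Prop :=
  u1 != u2 /\ I (binom K (u1, u2)) /\
  forall g1 g2 : 'X_{1..n}, g1 != g2 -> (g1 <= u1)%MM -> (g2 <= u2)%MM ->
    I (binom K (g1, g2)) -> g1 = u1 /\ g2 = u2.

Definition monomial_order (n : nat) (le : rel 'X_{1..n}) : Prop :=
  reflexive le /\ transitive le /\ antisymmetric le /\ total le /\
  (forall m, le 0%MM m) /\
  (forall m1 m2 m3, le m1 m2 -> le (m1 + m3)%MM (m2 + m3)%MM).

Definition is_lead_mon (K : fieldType) (n : nat) (le : rel 'X_{1..n})
  (p : {mpoly K[n]}) (m : 'X_{1..n}) : Prop :=
  m \in msupp p /\ forall m', m' \in msupp p -> le m' m.

Definition is_groebner (K : fieldType) (n : nat) (le : rel 'X_{1..n})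
  (I : {mpoly K[n]} -> Prop) (G : seq ('X_{1..n} * 'X_{1..n})) : Prop :=
  (forall g, g \in G -> I (binom K g)) /\
  forall f, I f -> f != 0 ->
    exists2 g, g \in G &
      exists mf mg, [/\ is_lead_mon le f mf, is_lead_mon le (binom K g) mg
                      & (mg <= mf)%MM].

Definition universal_groebner (K : fieldType) (n : nat)
  (I : {mpoly K[n]} -> Prop) (G : seq ('X_{1..n} * 'X_{1..n})) : Prop :=
  forall le : rel 'X_{1..n}, monomial_order le -> is_groebner le I G.

Definition mU (t : nat) (k : 'I_(nE t)) : 'X_{1..nE t} := U_(k)%MM.

Definition G1 (t : nat) : seq ('X_{1..nE t} * 'X_{1..nE t}) :=
  [seq ((mU (var_a i) + mU (var_b j))%MM, (mU (var_a j) + mU (var_b i))%MM)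
  | i : 'I_t <- enum 'I_t, j : 'I_t <- filter (fun j : 'I_t => (i < j)%N) (enum 'I_t)].

Definition fFe (t : nat) : 'X_{1..nE t} :=
  (mU (var_f1 t) + mU (var_f3 t) + mU (var_e2 t))%MM.
Definition fEe (t : nat) : 'X_{1..nE t} :=
  (mU (var_f2 t) + mU (var_e1 t) + mU (var_e3 t))%MM.

Definition G2 (t : nat) : seq ('X_{1..nE t} * 'X_{1..nE t}) :=
  [seq ((mU (var_a i) + mU (var_a j) + fFe t)%MM,
        (fEe t + mU (var_b i) + mU (var_b j))%MM)
  | i : 'I_t <- enum 'I_t, j : 'I_t <- filter (fun j : 'I_t => (i < j)%N) (enum 'I_t)].

Definition G3 (t : nat) : seq ('X_{1..nE t} * 'X_{1..nE t}) :=
  [seq ((mU (var_a i) + mU (var_a i) + fFe t)%MM,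
        (fEe t + mU (var_b i) + mU (var_b i))%MM)
  | i : 'I_t <- enum 'I_t].

Definition Gall (t : nat) : seq ('X_{1..nE t} * 'X_{1..nE t}) :=
  G1 t ++ G2 t ++ G3 t.

(* Main.v *)
Require Import Defs.
From HB Require Import structures.
From mathcomp Require Import all_boot all_order all_algebra.
From mathcomp Require Import mpoly.
From mathcomp Require Import zify ring.

Set Implicit Arguments.
Unset Strict Implicit.
Unset Printing Implicit Defensive.
Import Order.TTheory GRing.Theory.
Local Open Scope ring_scope.

Section Infra.
Variable t : nat.

Lemma nEE : nE t = (t.*2 + 6)%N. Proof. rewrite /nE; lia. Qed.

Lemma val_a (i : 'I_t) : nat_of_ord (var_a i) = i.
Proof. rewrite /var_a inordK //; have := ltn_ord i; rewrite /nE; lia. Qed.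
Lemma val_b (i : 'I_t) : nat_of_ord (var_b i) = (t + i)%N.
Proof. rewrite /var_b inordK //; have := ltn_ord i; rewrite /nE; lia. Qed.
Lemma val_e1 : nat_of_ord (var_e1 t) = t.*2. Proof. rewrite /var_e1 inordK //; rewrite /nE; lia. Qed.
Lemma val_e2 : nat_of_ord (var_e2 t) = (t.*2 + 1)%N. Proof. rewrite /var_e2 inordK //; rewrite /nE; lia. Qed.
Lemma val_e3 : nat_of_ord (var_e3 t) = (t.*2 + 2)%N. Proof. rewrite /var_e3 inordK //; rewrite /nE; lia. Qed.
Lemma val_f1 : nat_of_ord (var_f1 t) = (t.*2 + 3)%N. Proof. rewrite /var_f1 inordK //; rewrite /nE; lia. Qed.
Lemma val_f2 : nat_of_ord (var_f2 t) = (t.*2 + 4)%N. Proof. rewrite /var_f2 inordK //; rewrite /nE; lia. Qed.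
Lemma val_f3 : nat_of_ord (var_f3 t) = (t.*2 + 5)%N. Proof. rewrite /var_f3 inordK //; rewrite /nE; lia. Qed.

Definition vals := (val_a, val_b, val_e1, val_e2, val_e3, val_f1, val_f2, val_f3).
Lemma ordE n (x y : 'I_n) : (x == y) = (nat_of_ord x == nat_of_ord y). Proof. by []. Qed.

Lemma var_cases (k : 'I_(nE t)) :
  (exists i : 'I_t, k = var_a i) \/ (exists i : 'I_t, k = var_b i) \/
  k = var_e1 t \/ k = var_e2 t \/ k = var_e3 t \/ k = var_f1 t \/ k = var_f2 t \/ k = var_f3 t.
Proof.
have hk := ltn_ord k; rewrite {2}/nE in hk.
case: (ltnP k t) => h1.
  by left; exists (Ordinal h1); apply: val_inj; rewrite /= val_a.
case: (ltnP k t.*2) => h2.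
  have h3 : (k - t < t)%N by lia.
  by right; left; exists (Ordinal h3); apply: val_inj; rewrite /= val_b /=; lia.
do 2 right.
have : (nat_of_ord k == t.*2) || (nat_of_ord k == t.*2 + 1)%N || (nat_of_ord k == t.*2 + 2)%N || (nat_of_ord k == t.*2+3)%N
   || (nat_of_ord k == t.*2 + 4)%N || (nat_of_ord k == t.*2 + 5)%N by lia.
move=> /orP[/orP[/orP[/orP[/orP[]|]|]|]|] /eqP h.
- by left; apply: val_inj; rewrite /= val_e1.
- by right; left; apply: val_inj; rewrite /= val_e2.
- by do 2 right; left; apply: val_inj; rewrite /= val_e3.
- by do 3 right; left; apply: val_inj; rewrite /= val_f1.
- by do 4 right; left; apply: val_inj; rewrite /= val_f2.
- by do 5 right; apply: val_inj; rewrite /= val_f3.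
Qed.

Lemma sum_split (F : nat -> nat) :
  (\sum_(k < nE t) F k = \sum_(i < t) F i + \sum_(i < t) F (t + i) + F t.*2 + F (t.*2+1)
     + F (t.*2+2) + F (t.*2+3) + F (t.*2+4) + F (t.*2+5))%N.
Proof.
rewrite -(big_mkord xpredT F) -(big_mkord xpredT (fun i => F (t + i)%N)) -(big_mkord xpredT F) nEE.
rewrite (big_cat_nat _ (n := t)) //=; last lia.
rewrite (big_cat_nat _ (m := t) (n := t.*2)) //=; last lia.
rewrite -{2}(add0n t) big_addn.
have -> : (t.*2 - t = t)%N by lia.
have -> : (\sum_(0 <= i < t) F (i + t) = \sum_(0 <= i < t) F (t + i))%N.
  by apply: eq_bigr => i _; rewrite addnC.
have -> : (\sum_(t.*2 <= i < t.*2 + 6) F i = F t.*2 + F (t.*2+1)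
     + F (t.*2+2) + F (t.*2+3) + F (t.*2+4) + F (t.*2+5))%N.
  rewrite -{1}(add0n t.*2) big_addn.
  have -> : (t.*2 + 6 - t.*2 = 6)%N by lia.
  rewrite big_mkord !big_ord_recl big_ord0 /=.
  rewrite /bump /= (_ : (0 + t.*2 = t.*2)%N); last lia.
  rewrite (_ : (1 + 0 + t.*2 = t.*2 + 1)%N); last lia.
  rewrite (_ : (1 + (1 + 0) + t.*2 = t.*2 + 2)%N); last lia.
  rewrite (_ : (1 + (1 + (1 + 0)) + t.*2 = t.*2 + 3)%N); last lia.
  rewrite (_ : (1 + (1 + (1 + (1 + 0))) + t.*2 = t.*2 + 4)%N); last lia.
  rewrite (_ : (1 + (1 + (1 + (1 + (1 + 0)))) + t.*2 = t.*2 + 5)%N); last lia.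
  lia.
lia. lia.
Qed.


Definition ep1 (k : 'I_(nE t)) : 'I_(nV t) := inord (endpts t k).1.
Definition ep2 (k : 'I_(nE t)) : 'I_(nV t) := inord (endpts t k).2.

Definition phi (m : 'X_{1..nE t}) : 'X_{1..nV t} :=
  (\sum_(k < nE t) (U_(ep1 k) + U_(ep2 k)) *+ m k)%MM.

Lemma toric_X (K : fieldType) m : toric_map K t 'X_[m] = 'X_[phi m].
Proof.
rewrite /toric_map comp_mpolyX.
under eq_bigr => k _ do rewrite tnth_mktuple /edge_image -mpolyXD.
by rewrite mprodXnE.
Qed.

Lemma endpts_lt k : ((endpts t k).1 < nV t)%N && ((endpts t k).2 < nV t)%N.
Proof. rewrite /endpts /nV; repeat case: ifP => ? /=; lia. Qed.

Lemma phiE m (w : 'I_(nV t)) : phi m w =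
  (\sum_(k < nE t) m (inord k) * (((endpts t k).1 == w) + ((endpts t k).2 == w)))%N.
Proof.
rewrite /phi mnm_sumE; apply: eq_bigr => k _.
rewrite mulmnE mnmDE !mnm1E mulnC inord_val; congr (_ * (_ + _))%N.
  by rewrite ordE /ep1 inordK //; case/andP: (endpts_lt k).
by rewrite ordE /ep2 inordK //; case/andP: (endpts_lt k).
Qed.

Lemma endpts_a (i : nat) : (i < t)%N -> endpts t i = (0, 6 + i)%N.
Proof. by move=> h; rewrite /endpts h. Qed.
Lemma endpts_b (i : nat) : (i < t)%N -> endpts t (t + i) = (1, 6 + i)%N.
Proof. move=> h; rewrite /endpts; repeat case: ifP => ?; try (exfalso; lia); try (by []); congr (_,_); lia. Qed.
Lemma endpts_e1 : endpts t t.*2 = (0, 2)%N.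
Proof. rewrite /endpts; repeat case: ifP => ?; try (exfalso; lia); try (by []); congr (_,_); lia. Qed.
Lemma endpts_e2 : endpts t (t.*2+1) = (2, 3)%N.
Proof. rewrite /endpts; repeat case: ifP => ?; try (exfalso; lia); try (by []); congr (_,_); lia. Qed.
Lemma endpts_e3 : endpts t (t.*2+2) = (3, 0)%N.
Proof. rewrite /endpts; repeat case: ifP => ?; try (exfalso; lia); try (by []); congr (_,_); lia. Qed.
Lemma endpts_f1 : endpts t (t.*2+3) = (1, 4)%N.
Proof. rewrite /endpts; repeat case: ifP => ?; try (exfalso; lia); try (by []); congr (_,_); lia. Qed.
Lemma endpts_f2 : endpts t (t.*2+4) = (4, 5)%N.
Proof. rewrite /endpts; repeat case: ifP => ?; try (exfalso; lia); try (by []); congr (_,_); lia. Qed.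
Lemma endpts_f3 : endpts t (t.*2+5) = (5, 1)%N.
Proof. rewrite /endpts; repeat case: ifP => ?; try (exfalso; lia); try (by []); congr (_,_); lia. Qed.

Lemma phi_vert m (w : 'I_(nV t)) : phi m w =
  (\sum_(i < t) m (var_a i) * ((0 == w) + (6 + i == w)) +
   \sum_(i < t) m (var_b i) * ((1 == w) + (6 + i == w)) +
   m (var_e1 t) * ((0 == w) + (2 == w)) + m (var_e2 t) * ((2 == w) + (3 == w)) +
   m (var_e3 t) * ((3 == w) + (0 == w)) + m (var_f1 t) * ((1 == w) + (4 == w)) +
   m (var_f2 t) * ((4 == w) + (5 == w)) + m (var_f3 t) * ((5 == w) + (1 == w)))%N.
Proof.
rewrite phiE (sum_split (fun k => m (inord k) * (((endpts t k).1 == w) + ((endpts t k).2 == w))))%N.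
rewrite endpts_e1 endpts_e2 endpts_e3 endpts_f1 endpts_f2 endpts_f3.
congr (_ + _ + _ + _ + _ + _ + _ + _)%N.
  by apply: eq_bigr => i _; rewrite endpts_a.
by apply: eq_bigr => i _; rewrite endpts_b.
Qed.

Definition vx (c : nat) : 'I_(nV t) := inord c.
Lemma val_vx c : (c < t + 6)%N -> nat_of_ord (vx c) = c.
Proof. by move=> h; rewrite /vx inordK // /nV; lia. Qed.

Lemma sumc (F g : 'I_t -> nat) c : (forall i, g i = c) -> (\sum_i F i * g i = c * \sum_i F i)%N.
Proof. by move=> h; rewrite big_distrr; apply: eq_bigr => i _; rewrite h mulnC. Qed.

Lemma sum_pick (F g : 'I_t -> nat) (j : 'I_t) : (forall i, g i = (i == j)) -> (\sum_i F i * g i = F j)%N.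
Proof.
move=> h; rewrite (bigD1 j) //= h eqxx muln1 big1 ?addn0 // => i /negbTE hi.
by rewrite h hi muln0.
Qed.

Definition SA (m : 'X_{1..nE t}) := (\sum_(i < t) m (var_a i))%N.
Definition SB (m : 'X_{1..nE t}) := (\sum_(i < t) m (var_b i))%N.

Lemma phi_vx (m : 'X_{1..nE t}) c : (c < 6)%N -> phi m (vx c) =
  (SA m * (0 == c) + SB m * (1 == c) +
   m (var_e1 t) * ((0 == c) + (2 == c)) + m (var_e2 t) * ((2 == c) + (3 == c)) +
   m (var_e3 t) * ((3 == c) + (0 == c)) + m (var_f1 t) * ((1 == c) + (4 == c)) +
   m (var_f2 t) * ((4 == c) + (5 == c)) + m (var_f3 t) * ((5 == c) + (1 == c)))%N.
Proof.
move=> hc; rewrite phi_vert val_vx; last lia.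
rewrite (sumc _ (c := (0 == c)%N)); last by move=> i; lia.
rewrite (sumc _ (c := (1 == c)%N)); last by move=> i; lia.
rewrite /SA /SB (mulnC (0 == c)) (mulnC (1 == c)). done. Qed.

Lemma phi_vy (m : 'X_{1..nE t}) (j : 'I_t) : phi m (vx (6 + j)) = (m (var_a j) + m (var_b j))%N.
Proof.
rewrite phi_vert val_vx; last by have := ltn_ord j; lia.
rewrite (sum_pick _ (j := j)); last by move=> i; rewrite ordE; lia.
rewrite (sum_pick _ (j := j)); last by move=> i; rewrite ordE; lia.
have := ltn_ord j; lia.
Qed.

Lemma phi_eqs u v : phi u = phi v ->
  [/\ (SA u + u (var_e1 t) + u (var_e3 t) = SA v + v (var_e1 t) + v (var_e3 t))%N,
      (SB u + u (var_f1 t) + u (var_f3 t) = SB v + v (var_f1 t) + v (var_f3 t))%N,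
      (u (var_e1 t) + u (var_e2 t) = v (var_e1 t) + v (var_e2 t))%N,
      (u (var_e2 t) + u (var_e3 t) = v (var_e2 t) + v (var_e3 t))%N &
   [/\ (u (var_f1 t) + u (var_f2 t) = v (var_f1 t) + v (var_f2 t))%N,
      (u (var_f2 t) + u (var_f3 t) = v (var_f2 t) + v (var_f3 t))%N &
      forall j, (u (var_a j) + u (var_b j) = v (var_a j) + v (var_b j))%N]].
Proof.
move=> h.
have E c : (c < 6)%N -> phi u (vx c) = phi v (vx c) by rewrite h.
have := E 0%N isT; have := E 1%N isT; have := E 2%N isT; have := E 3%N isT;
have := E 4%N isT; have := E 5%N isT; rewrite !phi_vx //= => h5 h4 h3 h2 h1 h0.
split; try lia. split; try lia.
by move=> j; rewrite -!phi_vy h.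
Qed.

End Infra.

Section G.
Variable t : nat.

Lemma phiD (m1 m2 : 'X_{1..nE t}) : phi (m1 + m2)%MM = (phi m1 + phi m2)%MM.
Proof.
apply/mnmP => w; rewrite mnmDE !phiE -big_split; apply: eq_bigr => k _.
by rewrite mnmDE mulnDl.
Qed.

Lemma phiU (k : 'I_(nE t)) : phi (mU k) = (U_(ep1 k) + U_(ep2 k))%MM.
Proof.
rewrite /phi /mU (bigD1 k) //= mnm1E eqxx big1 ?addm0.
  by rewrite mulmS mulm0n addm0.
by move=> k' /negbTE hk; rewrite mnm1E eq_sym hk mulm0n.
Qed.

Lemma phiU_a (i : 'I_t) : phi (mU (var_a i)) = (U_(vx t 0) + U_(vx t (6 + i)))%MM.
Proof. by rewrite phiU /ep1 /ep2 val_a endpts_a. Qed.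
Lemma phiU_b (i : 'I_t) : phi (mU (var_b i)) = (U_(vx t 1) + U_(vx t (6 + i)))%MM.
Proof. by rewrite phiU /ep1 /ep2 val_b endpts_b. Qed.
Lemma phiU_e1 : phi (mU (var_e1 t)) = (U_(vx t 0) + U_(vx t 2))%MM.
Proof. by rewrite phiU /ep1 /ep2 val_e1 endpts_e1. Qed.
Lemma phiU_e2 : phi (mU (var_e2 t)) = (U_(vx t 2) + U_(vx t 3))%MM.
Proof. by rewrite phiU /ep1 /ep2 val_e2 endpts_e2. Qed.
Lemma phiU_e3 : phi (mU (var_e3 t)) = (U_(vx t 3) + U_(vx t 0))%MM.
Proof. by rewrite phiU /ep1 /ep2 val_e3 endpts_e3. Qed.
Lemma phiU_f1 : phi (mU (var_f1 t)) = (U_(vx t 1) + U_(vx t 4))%MM.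
Proof. by rewrite phiU /ep1 /ep2 val_f1 endpts_f1. Qed.
Lemma phiU_f2 : phi (mU (var_f2 t)) = (U_(vx t 4) + U_(vx t 5))%MM.
Proof. by rewrite phiU /ep1 /ep2 val_f2 endpts_f2. Qed.
Lemma phiU_f3 : phi (mU (var_f3 t)) = (U_(vx t 5) + U_(vx t 1))%MM.
Proof. by rewrite phiU /ep1 /ep2 val_f3 endpts_f3. Qed.

Definition phiUs := (phiU_a, phiU_b, phiU_e1, phiU_e2, phiU_e3, phiU_f1, phiU_f2, phiU_f3).

Definition G1p (i j : 'I_t) : 'X_{1..nE t} * 'X_{1..nE t} :=
  ((mU (var_a i) + mU (var_b j))%MM, (mU (var_a j) + mU (var_b i))%MM).
Definition G2p (i j : 'I_t) : 'X_{1..nE t} * 'X_{1..nE t} :=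
  ((mU (var_a i) + mU (var_a j) + fFe t)%MM, (fEe t + mU (var_b i) + mU (var_b j))%MM).
Definition G3p (i : 'I_t) : 'X_{1..nE t} * 'X_{1..nE t} :=
  ((mU (var_a i) + mU (var_a i) + fFe t)%MM, (fEe t + mU (var_b i) + mU (var_b i))%MM).

Lemma phiG1 i j : phi (G1p i j).1 = phi (G1p i j).2.
Proof. rewrite /= !phiD !phiUs; apply/mnmP => w; rewrite !mnmDE; lia. Qed.
Lemma phiG2 i j : phi (G2p i j).1 = phi (G2p i j).2.
Proof. rewrite /= /fFe /fEe !phiD !phiUs; apply/mnmP => w; rewrite !mnmDE; lia. Qed.
Lemma phiG3 i : phi (G3p i).1 = phi (G3p i).2.
Proof. rewrite /= /fFe /fEe !phiD !phiUs; apply/mnmP => w; rewrite !mnmDE; lia. Qed.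

Lemma Gall_cases g : g \in Gall t ->
  (exists i j : 'I_t, (i < j)%N /\ g = G1p i j) \/
  (exists i j : 'I_t, (i < j)%N /\ g = G2p i j) \/ (exists i : 'I_t, g = G3p i).
Proof.
rewrite /Gall !mem_cat => /orP[|/orP[]].
- case/allpairsPdep => [i [j [_ hj ->]]]; left; exists i, j; split => //.
  by move: hj; rewrite mem_filter => /andP[].
- case/allpairsPdep => [i [j [_ hj ->]]]; right; left; exists i, j; split => //.
  by move: hj; rewrite mem_filter => /andP[].
- by case/mapP => i _ ->; right; right; exists i.
Qed.

Lemma inG1 (i j : 'I_t) : (i < j)%N -> G1p i j \in Gall t.
Proof.
move=> h; rewrite /Gall !mem_cat; apply/orP; left.
by apply/allpairsPdep; exists i, j; rewrite mem_enum mem_filter mem_enum h.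
Qed.
Lemma inG2 (i j : 'I_t) : (i < j)%N -> G2p i j \in Gall t.
Proof.
move=> h; rewrite /Gall !mem_cat; apply/orP; right; apply/orP; left.
by apply/allpairsPdep; exists i, j; rewrite mem_enum mem_filter mem_enum h.
Qed.
Lemma inG3 (i : 'I_t) : G3p i \in Gall t.
Proof.
rewrite /Gall !mem_cat; apply/orP; right; apply/orP; right.
by apply/mapP; exists i; rewrite ?mem_enum.
Qed.

End G.

Lemma sumU_count n (xs : seq 'I_n) k : ((\sum_(x <- xs) U_(x))%MM k = count_mem k xs)%N.
Proof.
elim: xs => [|x xs IH]; first by rewrite big_nil mnm0E.
by rewrite big_cons mnmDE IH mnm1E.
Qed.

Lemma le_list n (xs : seq 'I_n) (u : 'X_{1..n}) :
  (forall x, x \in xs -> count_mem x xs <= u x)%N -> ((\sum_(x <- xs) U_(x)) <= u)%MM.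
Proof.
move=> h; apply/mnm_lepP => k; rewrite sumU_count.
case: (boolP (k \in xs)) => hk; first exact: h.
by move/count_memPn: hk => ->.
Qed.

Section K.
Variable t : nat.

Lemma mdeg_split (m : 'X_{1..nE t}) : mdeg m =
  (SA m + SB m + m (var_e1 t) + m (var_e2 t) + m (var_e3 t) + m (var_f1 t) + m (var_f2 t) + m (var_f3 t))%N.
Proof.
rewrite mdegE (eq_bigr (fun k : 'I_(nE t) => m (inord k))); last by move=> k _; rewrite inord_val.
by rewrite (sum_split t (fun k => m (inord k))).
Qed.

Lemma SAB_eq (u v : 'X_{1..nE t}) : phi u = phi v -> (SA u + SB u = SA v + SB v)%N.
Proof.
move/phi_eqs => [_ _ _ _ [_ _ hy]].
rewrite /SA /SB -!big_split; apply: eq_bigr => i _; exact: hy.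
Qed.

Lemma comb1 (F G : 'I_t -> nat) : (\sum_i G i + 2 <= \sum_i F i)%N ->
  (exists i, G i + 2 <= F i)%N \/ (exists i j : 'I_t, [/\ (i < j)%N, G i < F i & G j < F j]%N).
Proof.
move=> hs.
case: (pickP (fun i => G i + 2 <= F i)%N) => [i hi|h2]; first by left; exists i.
right.
case: (pickP (fun i => G i < F i)%N) => [i0 hi0|h1]; last first.
  have : (\sum_i F i <= \sum_i G i)%N.
    by apply: leq_sum => i _; have := h1 i; rewrite /= ltnNge => /negbFE.
  move=> ?; exfalso; lia.
case: (pickP (fun j => (j != i0) && (G j < F j))%N) => [j0 /andP[hne hj0]|h3].
  case: (ltngtP i0 j0) => hij.
  - by exists i0, j0.
  - by exists j0, i0.
  - by exfalso; move: hne; rewrite ordE hij eqxx.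
have : (\sum_i F i <= \sum_i G i + 1)%N.
  rewrite (bigD1 i0) //= (bigD1 i0 (F := G)) //=.
  have : (\sum_(i < t | i != i0) F i <= \sum_(i < t | i != i0) G i)%N.
    apply: leq_sum => i hi; have := h3 i; rewrite /= hi /= => /negbT; lia.
  have := h2 i0; rewrite /= => /negbT; rewrite -ltnNge => h4 h5.
  by rewrite addnAC; apply: leq_add => //; rewrite addn1; rewrite addn2 in h4.
move=> ?; exfalso; lia.
Qed.

Lemma comb2 (F G : 'I_t -> nat) : (\sum_i F i = \sum_i G i)%N -> forall i, (G i < F i)%N ->
  exists j, (F j < G j)%N.
Proof.
move=> hs i hi.
case: (pickP (fun j => F j < G j)%N) => [j hj|h]; first by exists j.
exfalso.
have : (\sum_j G j < \sum_j F j)%N.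
  rewrite (bigD1 i) //= (bigD1 i (F := F)) //= -addSn; apply: leq_add => //.
  by apply: leq_sum => j _; have := h j; rewrite /= ltnNge => /negbFE.
lia.
Qed.

Lemma sum_single (F : 'I_t -> nat) (i : 'I_t) : (forall l, l != i -> F l = 0%N) -> (\sum_l F l = F i)%N.
Proof. by move=> h; rewrite (bigD1 i) //= big1 ?addn0. Qed.

Lemma mnm_coords (u v : 'X_{1..nE t}) :
  (forall l, u (var_a l) = v (var_a l)) -> (forall l, u (var_b l) = v (var_b l)) ->
  u (var_e1 t) = v (var_e1 t) -> u (var_e2 t) = v (var_e2 t) -> u (var_e3 t) = v (var_e3 t) ->
  u (var_f1 t) = v (var_f1 t) -> u (var_f2 t) = v (var_f2 t) -> u (var_f3 t) = v (var_f3 t) -> u = v.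
Proof.
move=> ha hb h1 h2 h3 h4 h5 h6; apply/mnmP => k.
case: (var_cases k) => [[l ->]|[[l ->]|[->|[->|[->|[->|[->| -> ]]]]]]] //.
Qed.

End K.

Section K.
Variable t : nat.
Implicit Types u v : 'X_{1..nE t}.

Lemma G1_1E (i j : 'I_t) : (G1p i j).1 = (\sum_(x <- [:: var_a i; var_b j]) U_(x))%MM.
Proof. by rewrite /= !big_cons big_nil; apply/mnmP => k; rewrite !mnmDE mnm0E /mU; lia. Qed.
Lemma G1_2E (i j : 'I_t) : (G1p i j).2 = (\sum_(x <- [:: var_a j; var_b i]) U_(x))%MM.
Proof. by rewrite /= !big_cons big_nil; apply/mnmP => k; rewrite !mnmDE mnm0E /mU; lia. Qed.
Lemma G2_1E (i j : 'I_t) : (G2p i j).1 =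
  (\sum_(x <- [:: var_a i; var_a j; var_f1 t; var_f3 t; var_e2 t]) U_(x))%MM.
Proof. by rewrite /= /fFe !big_cons big_nil; apply/mnmP => k; rewrite !mnmDE mnm0E /mU; lia. Qed.
Lemma G2_2E (i j : 'I_t) : (G2p i j).2 =
  (\sum_(x <- [:: var_f2 t; var_e1 t; var_e3 t; var_b i; var_b j]) U_(x))%MM.
Proof. by rewrite /= /fEe !big_cons big_nil; apply/mnmP => k; rewrite !mnmDE mnm0E /mU; lia. Qed.
Lemma G3_1E (i : 'I_t) : (G3p i).1 =
  (\sum_(x <- [:: var_a i; var_a i; var_f1 t; var_f3 t; var_e2 t]) U_(x))%MM.
Proof. by rewrite /= /fFe !big_cons big_nil; apply/mnmP => k; rewrite !mnmDE mnm0E /mU; lia. Qed.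
Lemma G3_2E (i : 'I_t) : (G3p i).2 =
  (\sum_(x <- [:: var_f2 t; var_e1 t; var_e3 t; var_b i; var_b i]) U_(x))%MM.
Proof. by rewrite /= /fEe !big_cons big_nil; apply/mnmP => k; rewrite !mnmDE mnm0E /mU; lia. Qed.

Ltac cnt := rewrite /= ?ordE ?vals.

Lemma le_G1_1 u (i j : 'I_t) : (i < j)%N -> (1 <= u (var_a i))%N -> (1 <= u (var_b j))%N ->
  ((G1p i j).1 <= u)%MM.
Proof.
move=> hij h1 h2; rewrite G1_1E; apply: le_list => x; rewrite !inE.
by case/orP => /eqP ->; have := ltn_ord i; have := ltn_ord j; cnt => ? ?; lia.
Qed.
Lemma le_G1_2 u (i j : 'I_t) : (i < j)%N -> (1 <= u (var_a j))%N -> (1 <= u (var_b i))%N ->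
  ((G1p i j).2 <= u)%MM.
Proof.
move=> hij h1 h2; rewrite G1_2E; apply: le_list => x; rewrite !inE.
by case/orP => /eqP ->; have := ltn_ord i; have := ltn_ord j; cnt => ? ?; lia.
Qed.
Lemma le_G2_1 u (i j : 'I_t) : (i < j)%N -> (1 <= u (var_a i))%N -> (1 <= u (var_a j))%N ->
  (1 <= u (var_f1 t))%N -> (1 <= u (var_f3 t))%N -> (1 <= u (var_e2 t))%N ->
  ((G2p i j).1 <= u)%MM.
Proof.
move=> hij h1 h2 h3 h4 h5; rewrite G2_1E; apply: le_list => x; rewrite !inE.
by case/or4P => [| | | /orP[]] /eqP ->; have := ltn_ord i; have := ltn_ord j; cnt => ? ?; lia.
Qed.
Lemma le_G2_2 u (i j : 'I_t) : (i < j)%N -> (1 <= u (var_b i))%N -> (1 <= u (var_b j))%N ->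
  (1 <= u (var_f2 t))%N -> (1 <= u (var_e1 t))%N -> (1 <= u (var_e3 t))%N ->
  ((G2p i j).2 <= u)%MM.
Proof.
move=> hij h1 h2 h3 h4 h5; rewrite G2_2E; apply: le_list => x; rewrite !inE.
by case/or4P => [| | | /orP[]] /eqP ->; have := ltn_ord i; have := ltn_ord j; cnt => ? ?; lia.
Qed.
Lemma le_G3_1 u (i : 'I_t) : (2 <= u (var_a i))%N ->
  (1 <= u (var_f1 t))%N -> (1 <= u (var_f3 t))%N -> (1 <= u (var_e2 t))%N ->
  ((G3p i).1 <= u)%MM.
Proof.
move=> h1 h3 h4 h5; rewrite G3_1E; apply: le_list => x; rewrite !inE.
by case/or4P => [| | | /orP[]] /eqP ->; have := ltn_ord i; cnt => ?; lia.
Qed.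
Lemma le_G3_2 u (i : 'I_t) : (2 <= u (var_b i))%N ->
  (1 <= u (var_f2 t))%N -> (1 <= u (var_e1 t))%N -> (1 <= u (var_e3 t))%N ->
  ((G3p i).2 <= u)%MM.
Proof.
move=> h1 h3 h4 h5; rewrite G3_2E; apply: le_list => x; rewrite !inE.
by case/or4P => [| | | /orP[]] /eqP ->; have := ltn_ord i; cnt => ?; lia.
Qed.

End K.

Section K.
Variable t : nat.
Implicit Types u v : 'X_{1..nE t}.

Lemma key_pos u v : phi u = phi v -> (v (var_e2 t) < u (var_e2 t))%N ->
  exists g, [/\ g \in Gall t, (g.1 <= u)%MM & (g.2 <= v)%MM].
Proof.
move=> h he; have [hx1 hx2 hz1 hz2 [hw1 hw2 hy]] := phi_eqs h; have hs := SAB_eq h.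
have hSA : (SA v + 2 <= SA u)%N by lia.
case: (comb1 (F := fun l => u (var_a l)) (G := fun l => v (var_a l)) hSA) =>
  [[i hi]|[i [j [hij hi hj]]]] /=.
- exists (G3p i); split; first exact: inG3.
    apply: le_G3_1; lia.
  apply: le_G3_2; have := hy i; lia.
- exists (G2p i j); split; first exact: inG2.
    apply: le_G2_1 => //; lia.
  apply: le_G2_2 => //; have := hy i; have := hy j; lia.
Qed.

Lemma key_zero u v : phi u = phi v -> u (var_e2 t) = v (var_e2 t) -> u != v ->
  exists g, g \in Gall t /\ (((g.1 <= u)%MM && (g.2 <= v)%MM) || ((g.2 <= u)%MM && (g.1 <= v)%MM)).
Proof.
move=> h he hne; have [hx1 hx2 hz1 hz2 [hw1 hw2 hy]] := phi_eqs h; have hs := SAB_eq h.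
have main : forall i j : 'I_t, (v (var_a i) < u (var_a i))%N -> (u (var_a j) < v (var_a j))%N ->
  exists g, g \in Gall t /\ (((g.1 <= u)%MM && (g.2 <= v)%MM) || ((g.2 <= u)%MM && (g.1 <= v)%MM)).
  move=> i j hi hj.
  case: (ltngtP i j) => hij.
  - exists (G1p i j); split; first exact: inG1.
    apply/orP; left; apply/andP; split.
      by apply: le_G1_1 => //; have := hy j; lia.
    by apply: le_G1_2 => //; have := hy i; lia.
  - exists (G1p j i); split; first exact: inG1.
    apply/orP; right; apply/andP; split.
      by apply: le_G1_2 => //; have := hy j; lia.
    by apply: le_G1_1 => //; have := hy i; lia.
  - have hij' : i = j by apply: val_inj.
    by rewrite hij' in hi; lia.
have [l hl] : exists l, u (var_a l) != v (var_a l).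
  case: (pickP (fun l => u (var_a l) != v (var_a l))) => [l hl|hn]; first by exists l.
  exfalso; move/eqP: hne; apply.
  have ha : forall l, u (var_a l) = v (var_a l) by move=> l; have := hn l; move/negbFE/eqP.
  apply: mnm_coords => //; try lia.
  by move=> l'; have := hy l'; have := ha l'; lia.
case: (ltngtP (u (var_a l)) (v (var_a l))) => hl2.
- have hsA : SA v = SA u by lia.
  have [j hj] := comb2 (F := fun l => v (var_a l)) (G := fun l => u (var_a l)) hsA hl2.
  exact: main hj hl2.
- have hsA : SA u = SA v by lia.
  have [j hj] := comb2 (F := fun l => u (var_a l)) (G := fun l => v (var_a l)) hsA hl2.
  exact: main hl2 hj.
- by rewrite hl2 eqxx in hl.
Qed.

Lemma key u v : phi u = phi v -> u != v ->
  exists g, g \in Gall t /\ (((g.1 <= u)%MM && (g.2 <= v)%MM) || ((g.2 <= u)%MM && (g.1 <= v)%MM)).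
Proof.
move=> h hne.
case: (ltngtP (v (var_e2 t)) (u (var_e2 t))) => he.
- have [g [hg h1 h2]] := key_pos h he.
  by exists g; split => //; rewrite h1 h2.
- have [g [hg h1 h2]] := key_pos (esym h) he.
  by exists g; split => //; rewrite h1 h2 orbT.
- exact: key_zero h (esym he) hne.
Qed.

End K.

Lemma lem_eq n (m1 m2 : 'X_{1..n}) : (m1 <= m2)%MM -> (mdeg m2 <= mdeg m1)%N -> m1 = m2.
Proof.
move=> h hd; have e := submK h.
have : mdeg (m2 - m1)%MM = 0%N by move: hd; rewrite -{1}e mdegD; lia.
by move/eqP; rewrite mdeg_eq0 => /eqP h0; rewrite -e h0 add0m.
Qed.

Ltac ev := unfold fFe, fEe; rewrite /= ?mnmDE /mU ?mnm1E /= ?ordE ?vals.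

Section K.
Variable t : nat.
Implicit Types u v : 'X_{1..nE t}.

Lemma Gprops g : g \in Gall t ->
  [/\ phi g.1 = phi g.2, g.1 != g.2, (0 < mdeg g.1)%N & (0 < mdeg g.2)%N].
Proof.
case/Gall_cases => [[i [j [hij ->]]]|[[i [j [hij ->]]]|[i ->]]].
- split; first exact: phiG1.
  + apply/eqP => e; have := congr1 (fun m : 'X_{1..nE t} => m (var_a i)) e; ev; have := ltn_ord i; lia.
  + by rewrite /= !mdegD /mU !mdeg1.
  + by rewrite /= !mdegD /mU !mdeg1.
- split; first exact: phiG2.
  + apply/eqP => e; have := congr1 (fun m : 'X_{1..nE t} => m (var_a i)) e; ev; have := ltn_ord i; lia.
  + by rewrite /= /fFe !mdegD /mU !mdeg1.
  + by rewrite /= /fEe !mdegD /mU !mdeg1.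
- split; first exact: phiG3.
  + apply/eqP => e; have := congr1 (fun m : 'X_{1..nE t} => m (var_a i)) e; ev; have := ltn_ord i; lia.
  + by rewrite /= /fFe !mdegD /mU !mdeg1.
  + by rewrite /= /fEe !mdegD /mU !mdeg1.
Qed.


Lemma prim_G1 (i j : 'I_t) g1 g2 : (i < j)%N -> g1 != g2 -> (g1 <= (G1p i j).1)%MM ->
  (g2 <= (G1p i j).2)%MM -> phi g1 = phi g2 -> g1 = (G1p i j).1 /\ g2 = (G1p i j).2.
Proof.
move=> hij hne h1 h2 hphi.
have [hx1 hx2 hz1 hz2 [hw1 hw2 hy]] := phi_eqs hphi.
have L1 := mnm_lepP h1; have L2 := mnm_lepP h2.
have hi := ltn_ord i; have hj := ltn_ord j.
have sa1 : SA g1 = g1 (var_a i).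
  apply: sum_single => l hl; have := L1 (var_a l); ev; move: hl; rewrite ordE; have := ltn_ord l; lia.
have sb1 : SB g1 = g1 (var_b j).
  apply: sum_single => l hl; have := L1 (var_b l); ev; move: hl; rewrite ordE; have := ltn_ord l; lia.
have sa2 : SA g2 = g2 (var_a j).
  apply: sum_single => l hl; have := L2 (var_a l); ev; move: hl; rewrite ordE; have := ltn_ord l; lia.
have sb2 : SB g2 = g2 (var_b i).
  apply: sum_single => l hl; have := L2 (var_b l); ev; move: hl; rewrite ordE; have := ltn_ord l; lia.
have q1 : (g1 (var_a i) <= 1)%N by have := L1 (var_a i); ev; lia.
have q2 : (g1 (var_a j) = 0)%N by have := L1 (var_a j); ev; lia.
have q3 : (g1 (var_b i) = 0)%N by have := L1 (var_b i); ev; lia.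
have q5 : (g1 (var_e1 t) = 0)%N by have := L1 (var_e1 t); ev; lia.
have q6 : (g1 (var_e2 t) = 0)%N by have := L1 (var_e2 t); ev; lia.
have q7 : (g1 (var_e3 t) = 0)%N by have := L1 (var_e3 t); ev; lia.
have q8 : (g1 (var_f1 t) = 0)%N by have := L1 (var_f1 t); ev; lia.
have q9 : (g1 (var_f2 t) = 0)%N by have := L1 (var_f2 t); ev; lia.
have q10 : (g1 (var_f3 t) = 0)%N by have := L1 (var_f3 t); ev; lia.
have r1 : (g2 (var_a i) = 0)%N by have := L2 (var_a i); ev; lia.
have r4 : (g2 (var_b j) = 0)%N by have := L2 (var_b j); ev; lia.
have r5 : (g2 (var_e1 t) = 0)%N by have := L2 (var_e1 t); ev; lia.
have r6 : (g2 (var_e2 t) = 0)%N by have := L2 (var_e2 t); ev; lia.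
have r7 : (g2 (var_e3 t) = 0)%N by have := L2 (var_e3 t); ev; lia.
have r8 : (g2 (var_f1 t) = 0)%N by have := L2 (var_f1 t); ev; lia.
have r9 : (g2 (var_f2 t) = 0)%N by have := L2 (var_f2 t); ev; lia.
have r10 : (g2 (var_f3 t) = 0)%N by have := L2 (var_f3 t); ev; lia.
have yi := hy i; have yj := hy j.
have d1 := mdeg_split g1; have d2 := mdeg_split g2.
have D1 : mdeg (G1p i j).1 = 2%N by rewrite /= !mdegD /mU !mdeg1.
have D2 : mdeg (G1p i j).2 = 2%N by rewrite /= !mdegD /mU !mdeg1.
case: (posnP (g1 (var_a i))) => ha.
  exfalso; move/eqP: hne; apply.
  have z1 : mdeg g1 = 0%N by lia.
  have z2 : mdeg g2 = 0%N by lia.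
  by move/eqP: z1; rewrite mdeg_eq0 => /eqP ->; move/eqP: z2; rewrite mdeg_eq0 => /eqP ->.
split; apply: lem_eq => //; lia.
Qed.


Lemma prim23 (P Q g1 g2 : 'X_{1..nE t}) :
  (forall l, P (var_b l) = 0%N) -> P (var_e1 t) = 0%N -> P (var_e3 t) = 0%N -> P (var_f2 t) = 0%N ->
  (P (var_e2 t) <= 1)%N -> (P (var_f1 t) <= 1)%N -> (P (var_f3 t) <= 1)%N ->
  (forall l, Q (var_a l) = 0%N) -> Q (var_e2 t) = 0%N -> Q (var_f1 t) = 0%N -> Q (var_f3 t) = 0%N ->
  (Q (var_e1 t) <= 1)%N -> (Q (var_e3 t) <= 1)%N -> (Q (var_f2 t) <= 1)%N ->
  mdeg P = 5%N -> mdeg Q = 5%N ->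
  g1 != g2 -> (g1 <= P)%MM -> (g2 <= Q)%MM -> phi g1 = phi g2 -> g1 = P /\ g2 = Q.
Proof.
move=> pb pe1 pe3 pf2 pe2 pf1 pf3 qa qe2 qf1 qf3 qe1 qe3 qf2 dP dQ hne h1 h2 hphi.
have [hx1 hx2 hz1 hz2 [hw1 hw2 hy]] := phi_eqs hphi; have hs := SAB_eq hphi.
have L1 := mnm_lepP h1; have L2 := mnm_lepP h2.
have sb1 : SB g1 = 0%N.
  by apply: big1 => l _; have := L1 (var_b l); rewrite pb; lia.
have sa2 : SA g2 = 0%N.
  by apply: big1 => l _; have := L2 (var_a l); rewrite qa; lia.
have := L1 (var_e1 t); have := L1 (var_e2 t); have := L1 (var_e3 t);
have := L1 (var_f1 t); have := L1 (var_f2 t); have := L1 (var_f3 t).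
have := L2 (var_e1 t); have := L2 (var_e2 t); have := L2 (var_e3 t);
have := L2 (var_f1 t); have := L2 (var_f2 t); have := L2 (var_f3 t).
move=> ? ? ? ? ? ? ? ? ? ? ? ?.
have d1 := mdeg_split g1; have d2 := mdeg_split g2.
case: (posnP (g1 (var_e2 t))) => ha.
  exfalso; move/eqP: hne; apply.
  have z1 : mdeg g1 = 0%N by lia.
  have z2 : mdeg g2 = 0%N by lia.
  by move/eqP: z1; rewrite mdeg_eq0 => /eqP ->; move/eqP: z2; rewrite mdeg_eq0 => /eqP ->.
split; apply: lem_eq => //; lia.
Qed.

Lemma prim g g1 g2 : g \in Gall t -> g1 != g2 -> (g1 <= g.1)%MM -> (g2 <= g.2)%MM ->
  phi g1 = phi g2 -> g1 = g.1 /\ g2 = g.2.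
Proof.
case/Gall_cases => [[i [j [hij ->]]]|[[i [j [hij ->]]]|[i ->]]].
- exact: prim_G1.
- have hi := ltn_ord i; have hj := ltn_ord j.
  apply: prim23.
  + by move=> l; ev; have := ltn_ord l; lia.
  all: try by ev; lia.
  + by move=> l; ev; have := ltn_ord l; lia.
  + by rewrite /= /fFe !mdegD /mU !mdeg1.
  + by rewrite /= /fEe !mdegD /mU !mdeg1.
- have hi := ltn_ord i.
  apply: prim23.
  + by move=> l; ev; have := ltn_ord l; lia.
  all: try by ev; lia.
  + by move=> l; ev; have := ltn_ord l; lia.
  + by rewrite /= /fFe !mdegD /mU !mdeg1.
  + by rewrite /= /fEe !mdegD /mU !mdeg1.
Qed.

End K.

Section IG.
Variables (K : fieldType) (n : nat) (S : {mpoly K[n]} -> Prop).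

Lemma IG0 : ideal_gen S 0.
Proof. by exists [::], [::]; split => //; rewrite big_ord0. Qed.

Lemma IG1 c g : S g -> ideal_gen S (c * g).
Proof.
move=> h; exists [:: g], [:: c]; split => //; first by move=> x; rewrite inE => /eqP ->.
by split => //; rewrite big_ord1.
Qed.

Lemma IGD p q : ideal_gen S p -> ideal_gen S q -> ideal_gen S (p + q).
Proof.
move=> [gs [cs [hg [hs ->]]]] [gs' [cs' [hg' [hs' ->]]]].
exists (gs ++ gs'), (cs ++ cs'); split.
  by move=> x; rewrite mem_cat => /orP[/hg|/hg'].
split; first by rewrite !size_cat hs hs'.
rewrite size_cat big_split_ord /=; congr (_ + _); apply: eq_bigr => i _.
  by rewrite !nth_cat hs ltn_ord.
by rewrite !nth_cat hs ltnNge leq_addr /= addKn.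
Qed.

Lemma IGM q p : ideal_gen S p -> ideal_gen S (q * p).
Proof.
move=> [gs [cs [hg [hs ->]]]].
exists gs, (map (fun c => q * c) cs); split => //; split; first by rewrite size_map.
rewrite mulr_sumr; apply: eq_bigr => i _.
by rewrite (nth_map 0) ?mulrA // hs ltn_ord.
Qed.

Lemma IGN p : ideal_gen S p -> ideal_gen S (- p).
Proof. by move=> h; rewrite -mulN1r; apply: IGM. Qed.

End IG.

Section T.
Variables (K : fieldType) (t : nat).

Lemma toricM p q : toric_map K t (p * q) = toric_map K t p * toric_map K t q.
Proof. by rewrite /toric_map rmorphM. Qed.
Lemma toricD p q : toric_map K t (p + q) = toric_map K t p + toric_map K t q.
Proof. by rewrite /toric_map raddfD. Qed.
Lemma toricB p q : toric_map K t (p - q) = toric_map K t p - toric_map K t q.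
Proof. by rewrite /toric_map raddfB. Qed.
Lemma toricZ c p : toric_map K t (c *: p) = c *: toric_map K t p.
Proof. by rewrite /toric_map comp_mpolyZ. Qed.
Lemma toric_sum (I : Type) (r : seq I) (F : I -> {mpoly K[nE t]}) :
  toric_map K t (\sum_(i <- r) F i) = \sum_(i <- r) toric_map K t (F i).
Proof. by rewrite /toric_map raddf_sum. Qed.

Lemma toric_binom u : toric_map K t (binom K u) = 'X_[phi u.1] - 'X_[phi u.2].
Proof. by rewrite /binom toricB !toric_X. Qed.

Lemma X_inj (n : nat) (a b : 'X_{1..n}) : 'X_[a] = 'X_[b] :> {mpoly K[n]} -> a = b.
Proof.
move=> h; have := congr1 (fun p : {mpoly K[n]} => p@_a) h.
rewrite !mcoeffX eqxx; case: eqP => // _ /eqP; rewrite oner_eq0.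
by [].
Qed.

Lemma toric_binomP u : toric_ideal K t (binom K u) <-> phi u.1 = phi u.2.
Proof.
rewrite /toric_ideal toric_binom; split.
  by move/eqP; rewrite subr_eq0 => /eqP /X_inj.
by move=> ->; rewrite subrr.
Qed.

End T.

Section F.
Variables (K : fieldType) (t : nat).

Lemma toric_expand (p : {mpoly K[nE t]}) :
  toric_map K t p = \sum_(m <- msupp p) p@_m *: 'X_[phi m].
Proof.
rewrite {1}[p]mpolyE toric_sum; apply: eq_bigr => m _.
by rewrite toricZ toric_X.
Qed.

Lemma fib (p : {mpoly K[nE t]}) m : toric_map K t p = 0 -> m \in msupp p ->
  exists m', [/\ m' \in msupp p, m' != m & phi m' = phi m].
Proof.
move=> h0 hm.
case: (boolP (has (fun m0 => (m0 != m) && (phi m0 == phi m)) (msupp p))) =>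
  [/hasP[m0 h1 /andP[h2 /eqP h3]]|hn]; first by exists m0.
exfalso.
have := congr1 (mcoeff (phi m)) h0; rewrite toric_expand raddf_sum /= mcoeff0.
rewrite (bigD1_seq m) ?msupp_uniq //= mcoeffZ mcoeffX eqxx mulr1.
rewrite big_seq_cond big1 ?addr0.
  by move=> h; move: hm; rewrite mcoeff_msupp h eqxx.
move=> m0 /andP[hm0 hne]; rewrite mcoeffZ mcoeffX.
move/hasPn: hn => /(_ m0 hm0); rewrite hne /= => /negbTE ->.
by rewrite mulr0.
Qed.

Lemma binom_lead (le : rel 'X_{1..nE t}) (g : 'X_{1..nE t} * 'X_{1..nE t}) :
  g.1 != g.2 -> le g.2 g.1 -> reflexive le -> is_lead_mon le (binom K g) g.1.
Proof.
move=> hne hle hr; split.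
  rewrite mcoeff_msupp /binom mcoeffB !mcoeffX eqxx.
  by case: (eqVneq g.2 g.1) => [e|_]; [rewrite e eqxx in hne | rewrite subr0 oner_eq0].
move=> m'; rewrite mcoeff_msupp /binom mcoeffB !mcoeffX.
case: (eqVneq g.1 m') => [-> //|_]; case: (eqVneq g.2 m') => [<- //|_].
by rewrite subrr eqxx.
Qed.

Lemma binom_lead2 (le : rel 'X_{1..nE t}) (g : 'X_{1..nE t} * 'X_{1..nE t}) :
  g.1 != g.2 -> le g.1 g.2 -> reflexive le -> is_lead_mon le (binom K g) g.2.
Proof.
move=> hne hle hr; split.
  rewrite mcoeff_msupp /binom mcoeffB !mcoeffX eqxx.
  by case: (eqVneq g.1 g.2) => [e|_]; [rewrite e eqxx in hne | rewrite sub0r oppr_eq0 oner_eq0].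
move=> m'; rewrite mcoeff_msupp /binom mcoeffB !mcoeffX.
case: (eqVneq g.1 m') => [<- //|_]; case: (eqVneq g.2 m') => [<- //|_].
by rewrite subrr eqxx.
Qed.

Lemma exists_max (T : eqType) (le : rel T) (s : seq T) x0 : total le -> transitive le ->
  x0 \in s -> exists2 m, m \in s & forall m', m' \in s -> le m' m.
Proof.
move=> ht htr; elim: s x0 => [//|x s IH] x0 _.
case: s IH => [|y s] IH.
  by exists x; rewrite ?inE // => m'; rewrite inE => /eqP ->; case/orP: (ht x x).
have [m hm hmax] := IH y (mem_head _ _).
case/orP: (ht x m) => hxm.
  exists m; first by rewrite inE hm orbT.
  by move=> m'; rewrite inE => /orP[/eqP ->|/hmax].
exists x; first exact: mem_head.
by move=> m'; rewrite inE => /orP[/eqP ->|/hmax/(fun h => htr _ _ _ h hxm)] //; case/orP: (ht x x).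
Qed.

End F.

Section D.
Variables (K : fieldType) (t : nat).
Definition SG (q : {mpoly K[nE t]}) : Prop := q \in [seq binom K u | u <- Gall t].

Definition groeb_prop (u v : 'X_{1..nE t}) :=
  forall le : rel 'X_{1..nE t}, monomial_order le -> le v u -> v != u ->
  exists g, g \in Gall t /\ exists mg, is_lead_mon le (binom K g) mg /\ (mg <= u)%MM.

Lemma SG_binom g : g \in Gall t -> SG (binom K g).
Proof. by move=> h; apply: map_f. Qed.

Lemma step (u v p q : 'X_{1..nE t}) :
  (p <= u)%MM -> (q <= v)%MM -> phi p = phi q -> p != q ->
  ideal_gen SG ('X_[p] - 'X_[q]) ->
  (forall le : rel 'X_{1..nE t}, monomial_order le -> le q p ->
     exists g, g \in Gall t /\ exists mg, is_lead_mon le (binom K g) mg /\ (mg <= p)%MM) ->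
  phi u = phi v ->
  (phi (u - p)%MM = phi (v - q)%MM ->
     ideal_gen SG ('X_[(u - p)%MM] - 'X_[(v - q)%MM]) /\ groeb_prop (u - p)%MM (v - q)%MM) ->
  ideal_gen SG ('X_[u] - 'X_[v]) /\ groeb_prop u v.
Proof.
move=> hpu hqv hpq hne Ipq Gpq huv IH.
set u1 := (u - p)%MM; set v1 := (v - q)%MM.
have eu : u = (u1 + p)%MM by rewrite submK.
have ev : v = (v1 + q)%MM by rewrite submK.
have h1 : phi u1 = phi v1.
  by apply: (@addIm _ (phi p)); rewrite -phiD -eu hpq -phiD -ev.
have [I1 G1] := IH h1.
split.
  rewrite eu ev !mpolyXD.
  have -> : 'X_[u1] * 'X_[p] - 'X_[v1] * 'X_[q] =
    'X_[u1] * ('X_[p] - 'X_[q]) + 'X_[q] * ('X_[u1] - 'X_[v1]) :> {mpoly K[nE t]} by ring.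
  by apply: IGD; apply: IGM.
move=> le hmo hvu hne'.
have [hr [htr [has [htot [h0 hadd]]]]] := hmo.
have haddl : forall m1 m2 m3, le m1 m2 -> le (m3 + m1)%MM (m3 + m2)%MM.
  by move=> m1 m2 m3 h; rewrite ![(m3 + _)%MM]addmC; apply: hadd.
case: (boolP (le q p)) => hqp.
  have [g [hg [mg [hl hm]]]] := Gpq le hmo hqp.
  by exists g; split => //; exists mg; split => //; apply: lepm_trans hm hpu.
have hpq' : le p q by case/orP: (htot p q) => // h; rewrite h in hqp.
have huv' : forall m, le (m + p)%MM (m + q)%MM by move=> m; apply: haddl.
have hne1 : v1 != u1.
  apply/eqP => e; move/eqP: hne'; apply.
  apply: has; rewrite hvu /= eu ev e; exact: huv'.
have hle1 : le v1 u1.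
  case/orP: (htot v1 u1) => // h.
  exfalso; move/eqP: hne'; apply; apply: has; rewrite hvu /= eu ev.
  apply: htr (huv' v1); exact: hadd.
have [g [hg [mg [hl hm]]]] := G1 le hmo hle1 hne1.
exists g; split => //; exists mg; split => //.
by apply: lepm_trans hm _; rewrite /u1 lem_subr.
Qed.

Lemma dec n : forall u v : 'X_{1..nE t}, (mdeg u < n)%N -> phi u = phi v ->
  ideal_gen SG ('X_[u] - 'X_[v]) /\ groeb_prop u v.
Proof.
elim: n => [//|n IH] u v hd hphi.
case: (eqVneq u v) => [<-|hne].
  by split; [rewrite subrr; exact: IG0 | move=> le _ _; rewrite eqxx].
have [g [hg /orP[/andP[h1 h2]|/andP[h1 h2]]]] := key hphi hne;
  have [hp hne' hd1 hd2] := Gprops hg.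
- apply: (step h1 h2 hp hne' _ _ hphi).
  + by have h := IG1 1 (SG_binom hg); rewrite mul1r in h.
  + move=> le [hr _] hle; exists g; split => //; exists g.1; split; last exact: lepm_refl.
    exact: binom_lead.
  + move=> e; apply: IH e.
    have := mdegD (u - g.1)%MM g.1; rewrite submK //; lia.
- apply: (step h1 h2 (esym hp) _ _ _ hphi).
  + by rewrite eq_sym.
  + have h := IG1 1 (SG_binom hg); rewrite mul1r in h.
    by have := IGN h; rewrite /binom opprB.
  + move=> le [hr _] hle; exists g; split => //; exists g.2; split; last exact: lepm_refl.
    exact: binom_lead2.
  + move=> e; apply: IH e.
    have := mdegD (u - g.2)%MM g.2; rewrite submK //; lia.
Qed.

End D.

Section M.
Variables (K : fieldType) (t : nat).

Lemma gen n : forall p : {mpoly K[nE t]}, (size (msupp p) < n)%N -> toric_map K t p = 0 ->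
  ideal_gen (@SG K t) p.
Proof.
elim: n => [//|n IH] p hs h0.
case: (eqVneq p 0) => [->|hp]; first exact: IG0.
have [m hm] : exists m, m \in msupp p.
  case E: (msupp p) => [|m s]; last by exists m; rewrite inE eqxx.
  by move/eqP: E; rewrite msupp_eq0 (negbTE hp).
have [m' [hm' hne hphi]] := fib h0 hm.
set p' := p - p@_m *: ('X_[m] - 'X_[m']).
have hp' : p = p' + (p@_m)%:MP * ('X_[m] - 'X_[m']) by rewrite mul_mpolyC /p' subrK.
rewrite hp'; apply: IGD.
  apply: IH.
    have sub : {subset msupp p' <= rem m (msupp p)}.
      move=> x; rewrite (mem_rem_uniq _ (msupp_uniq p)) inE /= !mcoeff_msupp.
      rewrite /p' mcoeffB mcoeffZ mcoeffB !mcoeffX.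
      case: (eqVneq m x) => [<-|hmx].
        by rewrite (negbTE hne) subr0 mulr1 subrr eqxx.
      case: (eqVneq m' x) => [<-|hmx'].
        by move: hm'; rewrite mcoeff_msupp => ->; rewrite andbT.
      by rewrite subrr mulr0 subr0 => ->.
    have := uniq_leq_size (msupp_uniq p') sub; rewrite size_rem //.
    have : (0 < size (msupp p))%N by move: hm; case: (msupp p).
    move: (size (msupp p')) (size (msupp p)) hs => a b hs1 hb ha; lia.
  rewrite /p' toricB toricZ toricB !toric_X hphi subrr scaler0 subr0 //.
apply: IGM; exact: (@dec K t (mdeg m).+1 m m' (leqnn _) (esym hphi)).1.
Qed.

End M.

Theorem theorem3p3 (K : closedFieldType) (charK0 : [pchar K] =i pred0)
  (t : nat) (ht : (2 <= t)%N) :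
  [/\ (forall u, u \in Gall t -> primitive (toric_ideal K t) u.1 u.2),
      (forall p : {mpoly K[nE t]},
         toric_ideal K t p <->
         ideal_gen (fun q => q \in [seq binom K u | u <- Gall t]) p)
    & universal_groebner (toric_ideal K t) (Gall t)].
Proof.
have Ibin : forall u, u \in Gall t -> toric_ideal K t (binom K u).
  by move=> u hu; apply/toric_binomP; have [] := Gprops hu.
split.
- move=> u hu; have [hp hne _ _] := Gprops hu.
  split => //; split; first exact: (Ibin u hu).
  move=> g1 g2 hne' h1 h2 /toric_binomP /= hphi.
  exact: prim hu hne' h1 h2 hphi.
- move=> p; split.
    by move=> h; apply: (gen (n := (size (msupp p)).+1)).
  move=> [gs [cs [hg [hs ->]]]].
  rewrite /toric_ideal toric_sum big1 // => i _.
  rewrite toricM.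
  have : gs`_i \in gs by rewrite mem_nth.
  move/hg/mapP => [u hu ->]; move: (Ibin u hu); rewrite /toric_ideal => ->.
  by rewrite mulr0.
- move=> le hmo; split; first exact: Ibin.
  move=> f hf hf0.
  have [hr [htr [has [htot _]]]] := hmo.
  have [m0 hm0] : exists m, m \in msupp f.
    case E: (msupp f) => [|m s]; last by exists m; rewrite inE eqxx.
    by move/eqP: E; rewrite msupp_eq0 (negbTE hf0).
  have [mf hmf hmax] := exists_max htot htr hm0.
  have [m' [hm' hne hphi]] := fib hf hmf.
  have [_ G] := @dec K t (mdeg mf).+1 mf m' (leqnn _) (esym hphi).
  have [g [hg [mg [hl hle]]]] := G le hmo (hmax _ hm') hne.
  exists g => //; exists mf, mg; split => //.
Qed.
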